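(* Let $n,d\in\mathbb{N}$, $y_1,\dots,y_n\in\{-1,+1\}$, $z_1,\dots,z_n$ in a real Hilbert space $\mathcal{Z}$, $\tilde x_1,\dots,\tilde x_n\in\mathbb{R}^d$, $C>0$, $\gamma\ge0$, and let $(w^\star,b^\star,\tilde w^\star,\tilde b^\star,\alpha^\star,\beta^\star)$ be a primal-dual optimal point of the SVM+ problem with correcting vectors $\tilde z_i=\tilde x_i$ (Euclidean inner product). Let $h_i=[1-y_i(\langle w^\star,z_i\rangle+b^\star)]_+$ and suppose $$\frac{\sum_i(\alpha^\star_i+\beta^\star_i)h_i}{\sum_i(\alpha^\star_i+\beta^\star_i)}=\frac1n\sum_ih_i .$$ Then $\langle\tilde w^\star,\tilde x_i\rangle+\tilde b^\star=h_i$ for all $i=1,\dots,n$. Furthermore: (1) if $\gamma>0$, then $\tilde w^\star=0$ and $\tilde b^\star=h_i$ for all $i$ (so the loss $h_i$ is the same at all data points); (2) if $\gamma=0$, then $\tilde X\tilde\alpha^\star=0$, where $\tilde X=[\tilde x_1\cdots\tilde x_n]\in\mathbb{R}^{d\times n}$ and $\tilde\alpha^\star=\alpha^\star+\beta^\star-C\mathbf 1$; if additionally $\operatorname{rank}(\tilde X)=n$, then $\alpha^\star_i+\beta^\star_i=C$ for all $i$, every vector of $\mathbb{R}^n$ is of the form $(\langle\tilde w,\tilde x_i\rangle+\tilde b)_{i=1}^n$ for some $\tilde w\in\mathbb{R}^d,\tilde b\in\mathbb{R}$, and $(w^\star,b^\star,\xi^\star,\alpha^\star,\beta^\star)$ with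 $\xi^\star_i=\langle\tilde w^\star,\tilde x_i\rangle+\tilde b^\star$ is a primal-dual optimal point of the standard soft-margin SVM with parameter $C$.
   Context: SVM+ problem: $\min_{w\in\mathcal Z,b\in\mathbb R,\tilde w\in\mathbb R^d,\tilde b\in\mathbb R}\frac12(\|w\|^2+\gamma\|\tilde w\|^2)+C\sum_i(\langle\tilde w,\tilde x_i\rangle+\tilde b)$ subject to $y_i(\langle w,z_i\rangle+b)\ge1-(\langle\tilde w,\tilde x_i\rangle+\tilde b)$ and $\langle\tilde w,\tilde x_i\rangle+\tilde b\ge0$; primal-dual optimal points satisfy the KKT conditions $w=\sum_i\alpha_iy_iz_i$, $\sum_i\alpha_iy_i=0$, $\sum_i(\alpha_i+\beta_i-C)\tilde x_i=\gamma\tilde w$, $\sum_i(\alpha_i+\beta_i-C)=0$, $\alpha_i[\langle\tilde w,\tilde x_i\rangle+\tilde b-1+y_i(\langle w,z_i\rangle+b)]=0$, $\beta_i[\langle\tilde w,\tilde x_i\rangle+\tilde b]=0$, primal feasibility, $\alpha,\beta\ge0$. The standard soft-margin SVM with parameter $C$ is $\min_{w,b,\xi}\frac12\|w\|^2+C\sum_i\xi_i$ subject to $y_i(\langle w,z_i\rangle+b)\ge1-\xi_i$, $\xi_i\ge0$; its primal-dual optimal points $(w,b,\xi,\alpha,\beta)$ satisfy $w=\sum_i\alpha_iy_iz_i$, $\sum_i\alpha_iy_i=0$, $\alpha_i+\beta_i=C$, $\alpha_i[\xi_i-1+y_i(\langle w,z_i\rangle+b)]=0$, $\beta_i\xi_i=0$,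 primal feasibility, $\alpha,\beta\ge0$. $\mathbf 1$ is the all-ones vector. *)

(* Defs.v *)
From HB Require Import structures.
From mathcomp Require Import all_boot all_order all_algebra.
From mathcomp Require Import all_classical all_reals all_analysis.
Set Implicit Arguments. Unset Strict Implicit. Unset Printing Implicit Defensive.
Import Order.TTheory GRing.Theory Num.Theory.
Import numFieldNormedType.Exports.
Local Open Scope ring_scope.

(* A real Hilbert space is modelled as a complete normed space Z over R whose
   norm comes from a symmetric bilinear form [ip]. *)
Definition is_inner_product (R : realType) (Z : normedModType R)
  (ip : Z -> Z -> R) : Prop :=
  [/\ (forall x y, ip x y = ip y x),
      (forall (a : R) (x y u : Z), ip (a *: x + y) u = a * ip x u + ip y u)
    & (forall x, ip x x = `|x| ^+ 2)].

Definition dotv (R : realType) (d : nat) (u v : 'cV[R]_d) : R :=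
  \sum_(k < d) u k 0 * v k 0.

Definition lagrangian (R : realType) (X : Type) (J : finType)
  (f : X -> R) (g : J -> X -> R) (x : X) (lam : J -> R) : R :=
  f x + \sum_(j : J) lam j * g j x.

Definition feasible (R : realType) (X : Type) (J : finType)
  (g : J -> X -> R) (x : X) : Prop := forall j, g j x <= 0.

(* (x, lam) is a primal-dual optimal point:
   x is primal optimal, lam is dual optimal (maximizes the dual function
   D(mu) = inf_x' L(x', mu) over mu >= 0), and there is zero duality gap
   (D(lam) = f x, i.e. f x is the infimum of L(., lam)).
   "D(mu) <= D(lam)" is expressed as: every lower bound of L(.,mu) is a lower
   bound of L(.,lam) (this handles D = -oo without extended reals). *)
Definition primal_dual_optimal (R : realType) (X : Type) (J : finType)
  (f : X -> R) (g : J -> X -> R) (x : X) (lam : J -> R) : Prop :=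
  [/\ feasible g x,
      (forall x', feasible g x' -> f x <= f x'),
      (forall j, 0 <= lam j),
      (forall mu : J -> R, (forall j, 0 <= mu j) ->
         forall t : R, (forall x', t <= lagrangian f g x' mu) ->
                       (forall x', t <= lagrangian f g x' lam))
    & ((forall x', f x <= lagrangian f g x' lam) /\
       (forall t : R, (forall x', t <= lagrangian f g x' lam) -> t <= f x))].

Definition svmp_obj (R : realType) (Z : normedModType R) (ip : Z -> Z -> R)
  (n d : nat) (xt : 'I_n -> 'cV[R]_d) (C gamma : R)
  (p : Z * R * 'cV[R]_d * R) : R :=
  let '(w, b, wt, bt) := p in
  2^-1 * (ip w w + gamma * dotv wt wt) + C * \sum_(i < n) (dotv wt (xt i) + bt).

Definition svmp_cons (R : realType) (Z : normedModType R) (ip : Z -> Z -> R)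
  (n d : nat) (y : 'I_n -> R) (z : 'I_n -> Z) (xt : 'I_n -> 'cV[R]_d)
  (j : 'I_n + 'I_n) (p : Z * R * 'cV[R]_d * R) : R :=
  let '(w, b, wt, bt) := p in
  match j with
  | inl i => 1 - (dotv wt (xt i) + bt) - y i * (ip w (z i) + b)
  | inr i => - (dotv wt (xt i) + bt)
  end.

Definition svm_obj (R : realType) (Z : normedModType R) (ip : Z -> Z -> R)
  (n : nat) (C : R) (p : Z * R * ('I_n -> R)) : R :=
  let '(w, b, xi) := p in 2^-1 * ip w w + C * \sum_(i < n) xi i.

Definition svm_cons (R : realType) (Z : normedModType R) (ip : Z -> Z -> R)
  (n : nat) (y : 'I_n -> R) (z : 'I_n -> Z)
  (j : 'I_n + 'I_n) (p : Z * R * ('I_n -> R)) : R :=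
  let '(w, b, xi) := p in
  match j with
  | inl i => 1 - xi i - y i * (ip w (z i) + b)
  | inr i => - xi i
  end.

Definition mults (R : realType) (n : nat) (alpha beta : 'I_n -> R)
  (j : 'I_n + 'I_n) : R :=
  match j with inl i => alpha i | inr i => beta i end.

Definition Xmat (R : realType) (n d : nat) (xt : 'I_n -> 'cV[R]_d) : 'M[R]_(d, n) :=
  \matrix_(k < d, i < n) xt i k 0.

(* Main.v *)
Require Import Defs.
From HB Require Import structures.
From mathcomp Require Import all_boot all_order all_algebra.
From mathcomp Require Import all_classical all_reals all_analysis.
From mathcomp Require Import ring lra.
Import Order.TTheory GRing.Theory Num.Theory.
Import numFieldNormedType.Exports.
Local Open Scope ring_scope.

Lemma dotvC {R : realType} {d : nat} (u v : 'cV[R]_d) : dotv u v = dotv v u.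
Proof. by apply: eq_bigr => k _; rewrite mulrC. Qed.

Lemma dotvDZl {R : realType} {d : nat} (u v x : 'cV[R]_d) (t : R) :
  dotv (u + t *: v) x = dotv u x + t * dotv v x.
Proof.
rewrite /dotv mulr_sumr -big_split; apply: eq_bigr => k _; rewrite !mxE /=; ring.
Qed.

Lemma dotvDZr {R : realType} {d : nat} (u v x : 'cV[R]_d) (t : R) :
  dotv x (u + t *: v) = dotv x u + t * dotv x v.
Proof. by rewrite dotvC dotvDZl (dotvC u) (dotvC v). Qed.

Lemma dotv0l {R : realType} {d : nat} (x : 'cV[R]_d) : dotv 0 x = 0.
Proof. by rewrite /dotv big1 // => k _; rewrite mxE mul0r. Qed.

Lemma dotv0r {R : realType} {d : nat} (x : 'cV[R]_d) : dotv x 0 = 0.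
Proof. by rewrite dotvC dotv0l. Qed.

Lemma dotv_delta {R : realType} {d : nat} (k : 'I_d) (x : 'cV[R]_d) :
  dotv (delta_mx k 0) x = x k 0.
Proof.
rewrite /dotv (bigD1 k) //= big1 ?addr0.
  by rewrite mxE !eqxx mul1r.
by move=> l Hl; rewrite mxE (negbTE Hl) mul0r.
Qed.

Lemma dotv_ge0 {R : realType} {d : nat} (u : 'cV[R]_d) : 0 <= dotv u u.
Proof. by rewrite /dotv; apply: sumr_ge0 => k _; rewrite -expr2 sqr_ge0. Qed.

Lemma dotv_eq0 {R : realType} {d : nat} (u : 'cV[R]_d) : dotv u u = 0 -> u = 0.
Proof.
move=> H; apply/matrixP => k j; rewrite (ord1 j) mxE.
have pos : forall l : 'I_d, xpredT l -> 0 <= u l 0 * u l 0.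
  by move=> l _; rewrite -expr2 sqr_ge0.
have := psumr_eq0P (P := xpredT) (F := fun k => u k 0 * u k 0) pos H (i:=k) isT.
by move/eqP; rewrite mulf_eq0 orbb => /eqP.
Qed.

Lemma quad0 {R : realType} (a c : R) :
  (forall t, 0 <= t * a + t ^+ 2 * c) -> a = 0.
Proof.
move=> H; set k := `|c| + 1.
have kp : 0 < k by rewrite /k ltr_pwDr // normr_ge0.
have ck : c < k by rewrite /k (le_lt_trans (ler_norm c)) // ltrDl.
pose t := - a / (2 * k).
have ha : a = - (2 * k * t) by rewrite /t; field; rewrite gt_eqF.
have Ht := H t; rewrite ha in Ht.
have t0 : t ^+ 2 <= 0 by nra.
have : t = 0 by apply/eqP; rewrite -sqrf_eq0 eq_le t0 sqr_ge0.
by rewrite ha => ->; rewrite mulr0 oppr0.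
Qed.

Lemma Lform {R : realType} {Z : normedModType R} (ip : Z -> Z -> R) (n d : nat)
  (y : 'I_n -> R) (z : 'I_n -> Z) (xt : 'I_n -> 'cV[R]_d) (C gamma : R)
  (alpha beta : 'I_n -> R) w b wt bt :
  lagrangian (svmp_obj ip xt C gamma) (svmp_cons ip y z xt) (w, b, wt, bt)
    (mults alpha beta) =
  2^-1 * ip w w + \sum_(i < n) alpha i * (1 - y i * (ip w (z i) + b))
  + 2^-1 * gamma * dotv wt wt
  + \sum_(i < n) (C - alpha i - beta i) * (dotv wt (xt i) + bt).
Proof.
rewrite /lagrangian big_sumType /=.
have e1 : \sum_(i < n) alpha i * (1 - (dotv wt (xt i) + bt) - y i * (ip w (z i) + b))
  = \sum_(i < n) alpha i * (1 - y i * (ip w (z i) + b))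
    - \sum_(i < n) alpha i * (dotv wt (xt i) + bt).
  by rewrite -sumrB; apply: eq_bigr => i _; ring.
have e2 : \sum_(i < n) beta i * - (dotv wt (xt i) + bt)
  = - \sum_(i < n) beta i * (dotv wt (xt i) + bt).
  by rewrite -sumrN; apply: eq_bigr => i _; ring.
have e3 : \sum_(i < n) (C - alpha i - beta i) * (dotv wt (xt i) + bt)
  = C * \sum_(i < n) (dotv wt (xt i) + bt)
    - \sum_(i < n) alpha i * (dotv wt (xt i) + bt)
    - \sum_(i < n) beta i * (dotv wt (xt i) + bt).
  by rewrite mulr_sumr -!sumrB; apply: eq_bigr => i _; ring.
rewrite e1 e2 e3; ring.
Qed.

Theorem proposition4 (R : realType) (Z : completeNormedModType R)
  (ip : Z -> Z -> R) (n d : nat)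
  (y : 'I_n -> R) (z : 'I_n -> Z) (xt : 'I_n -> 'cV[R]_d) (C gamma : R)
  (w : Z) (b : R) (wt : 'cV[R]_d) (bt : R) (alpha beta : 'I_n -> R) :
  is_inner_product ip ->
  (forall i, y i = 1 \/ y i = -1) ->
  0 < C -> 0 <= gamma ->
  primal_dual_optimal (svmp_obj ip xt C gamma) (svmp_cons ip y z xt)
    (w, b, wt, bt) (mults alpha beta) ->
  let h := fun i => Num.max 0 (1 - y i * (ip w (z i) + b)) in
  (\sum_(i < n) (alpha i + beta i) * h i) / (\sum_(i < n) (alpha i + beta i))
    = n%:R^-1 * \sum_(i < n) h i ->
  (forall i, dotv wt (xt i) + bt = h i) /\
  (0 < gamma -> wt = 0 /\ (forall i, bt = h i)) /\
  (gamma = 0 ->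
     Xmat xt *m (\col_(i < n) (alpha i + beta i - C)) = 0 /\
     (\rank (Xmat xt) = n ->
        (forall i, alpha i + beta i = C) /\
        (forall v : 'cV[R]_n, exists (wt' : 'cV[R]_d) (bt' : R),
            forall i, v i 0 = dotv wt' (xt i) + bt') /\
        primal_dual_optimal (svm_obj ip C) (svm_cons ip y z)
          (w, b, fun i => dotv wt (xt i) + bt) (mults alpha beta))).
Proof.
move=> _ _ Cp g0 [feas popt lam0 dopt [gap1 gap2]] h Hh.
pose s i := dotv wt (xt i) + bt.
pose m i := ip w (z i) + b.
pose F j := mults alpha beta j * svmp_cons ip y z xt j (w, b, wt, bt).
have cs : forall j, F j = 0.
  have Fle k : F k <= 0 := mulr_ge0_le0 (lam0 k) (feas k).
  have S0 : \sum_k - F k = 0.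
    apply/le_anti; rewrite sumr_ge0 ?andbT; last by move=> k _; rewrite oppr_ge0.
    have := gap1 (w, b, wt, bt); rewrite /lagrangian lerDl sumrN oppr_le0.
    by [].
  move=> j; apply/eqP; rewrite -oppr_eq0; apply/eqP.
  by apply: (psumr_eq0P (P := xpredT) (F := fun k => - F k) _ S0 (i := j)) => // k _; rewrite oppr_ge0.
have ca i : alpha i * (1 - s i - y i * m i) = 0 := cs (inl i).
have cb i : beta i * (- s i) = 0 := cs (inr i).
have f1 i : 1 - s i - y i * m i <= 0 := feas (inl i).
have f2 i : - s i <= 0 := feas (inr i).
have Lmin p : lagrangian (svmp_obj ip xt C gamma) (svmp_cons ip y z xt) (w, b, wt, bt)
    (mults alpha beta) <= lagrangian (svmp_obj ip xt C gamma) (svmp_cons ip y z xt) p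
    (mults alpha beta).
  rewrite {1}/lagrangian big1 ?addr0; first exact: gap1.
  by move=> j _; exact: cs.
have stat v r : gamma * dotv wt v
    + \sum_(i < n) (C - alpha i - beta i) * (dotv v (xt i) + r) = 0.
  apply: (quad0 _ (2^-1 * gamma * dotv v v)) => t.
  have := Lmin (w, b, wt + t *: v, bt + t * r); rewrite !Lform.
  rewrite dotvDZl !dotvDZr (dotvC v wt).
  have -> : \sum_(i < n) (C - alpha i - beta i) * (dotv (wt + t *: v) (xt i) + (bt + t * r))
    = \sum_(i < n) (C - alpha i - beta i) * (dotv wt (xt i) + bt)
      + t * \sum_(i < n) (C - alpha i - beta i) * (dotv v (xt i) + r).
    by rewrite mulr_sumr -big_split; apply: eq_bigr => i _ /=; rewrite dotvDZl; ring.
  move=> H; rewrite -subr_ge0 in H; apply: (le_trans H); rewrite le_eqVlt; apply/orP; left; apply/eqP; by field.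
have SC : \sum_(i < n) (C - alpha i - beta i) = 0.
  have := stat 0 1; rewrite dotv0r mulr0 add0r => E; rewrite -[RHS]E.
  by apply: eq_bigr => i _; rewrite dotv0l add0r mulr1.
have SW : gamma * dotv wt wt + \sum_(i < n) (C - alpha i - beta i) * dotv wt (xt i) = 0.
  by rewrite -[RHS](stat wt 0); congr (_ + _); apply: eq_bigr => i _; rewrite addr0.
have hs i : h i <= s i.
  rewrite /h ge_max; apply/andP; split; [have := f2 i | have := f1 i]; rewrite /m; lra.
have hge i : 1 - y i * m i <= h i by rewrite /h le_max lexx orbT.
have hge0 i : 0 <= h i by rewrite /h le_max lexx.
have abz i : (alpha i + beta i) * (s i - h i) = 0.
  have a0 := lam0 (inl i); have b0 := lam0 (inr i); simpl in a0, b0.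
  have := ca i; have := cb i; have := hs i; have := hge i; have := hge0 i.
  nra.
have Hab : \sum_(i < n) (alpha i + beta i) * h i = C * \sum_(i < n) h i.
  have [n0|np] := eqVneq n 0%N.
    rewrite !big1 ?mulr0 // => i _; exfalso; move: (nat_of_ord i) (ltn_ord i) => k; by rewrite n0.
  have Sab : \sum_(i < n) (alpha i + beta i) = C * n%:R.
    have : \sum_(i < n) (C - alpha i - beta i)
        = \sum_(i < n) C - \sum_(i < n) (alpha i + beta i).
      by rewrite -sumrB; apply: eq_bigr => i _; ring.
    rewrite SC sumr_const card_ord -mulr_natr => E; lra.
  rewrite Sab in Hh.
  have nz : C * n%:R != 0 by rewrite mulf_neq0 ?gt_eqF // ltr0n lt0n np.
  have := congr1 (fun x => x * (C * n%:R)) Hh; rewrite /= divfK // => ->.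
  by field; rewrite pnatr_eq0.
have Hs : \sum_(i < n) (alpha i + beta i) * s i = C * \sum_(i < n) h i.
  rewrite -Hab; apply: eq_bigr => i _.
  by apply/eqP; rewrite -subr_eq0 -mulrBr; apply/eqP; exact: abz i.
have Hcs : \sum_(i < n) (C - alpha i - beta i) * s i = - (gamma * dotv wt wt).
  have -> : \sum_(i < n) (C - alpha i - beta i) * s i
      = \sum_(i < n) (C - alpha i - beta i) * dotv wt (xt i)
        + bt * \sum_(i < n) (C - alpha i - beta i).
    by rewrite mulr_sumr -big_split; apply: eq_bigr => i _ /=; rewrite /s; ring.
  rewrite SC mulr0 addr0; move: SW; rewrite addrC => /eqP; rewrite addr_eq0 => /eqP ->.
  by [].
have key : C * \sum_(i < n) (s i - h i) + gamma * dotv wt wt = 0.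
  have : \sum_(i < n) (C - alpha i - beta i) * s i
      = C * \sum_(i < n) s i - \sum_(i < n) (alpha i + beta i) * s i.
    by rewrite mulr_sumr -sumrB; apply: eq_bigr => i _; ring.
  rewrite Hcs Hs sumrB => E; rewrite mulrBr; lra.
have p1 : 0 <= \sum_(i < n) (s i - h i).
  by apply: sumr_ge0 => i _; rewrite subr_ge0.
have p2 : 0 <= gamma * dotv wt wt by rewrite mulr_ge0 // dotv_ge0.
have p3 : 0 <= C * \sum_(i < n) (s i - h i) by rewrite mulr_ge0 // ltW.
have gD0 : gamma * dotv wt wt = 0 by lra.
have sum0 : \sum_(i < n) (s i - h i) = 0.
  have : C * \sum_(i < n) (s i - h i) = 0 by lra.
  by move/eqP; rewrite mulf_eq0 gt_eqF //= => /eqP.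
have seq i : s i = h i.
  have pos : forall k : 'I_n, xpredT k -> 0 <= s k - h k.
    by move=> k _; rewrite subr_ge0.
  have := psumr_eq0P (P := xpredT) (F := fun k => s k - h k) pos sum0 (i := i) isT.
  by move/eqP; rewrite subr_eq0 => /eqP.
split; first exact: seq.
split.
  move=> gp.
  have wt0 : wt = 0.
    by apply: dotv_eq0; move/eqP: gD0; rewrite mulf_eq0 gt_eqF //= => /eqP.
  by split => // i; rewrite -seq /s wt0 dotv0l add0r.
move=> g_0; subst gamma.
have Xc : Xmat xt *m (\col_(i < n) (alpha i + beta i - C)) = 0.
  apply/matrixP => k j; rewrite !mxE.
  have := stat (delta_mx k 0) 0; rewrite mul0r add0r => E.
  apply: (@eq_trans _ _ (- \sum_(i < n) (C - alpha i - beta i) * (dotv (delta_mx k 0) (xt i) + 0))); last by rewrite E oppr0.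
  rewrite -sumrN; apply: eq_bigr => i _; rewrite !mxE dotv_delta addr0; ring.
split => // HR.
have rf : row_free (Xmat xt)^T by rewrite /row_free mxrank_tr HR.
have c0 : (\col_(i < n) (alpha i + beta i - C)) = 0 :> 'cV[R]_n.
  apply: trmx_inj; rewrite trmx0; apply: (row_free_inj rf).
  by rewrite mul0mx -trmx_mul Xc trmx0.
have abC i : alpha i + beta i = C.
  have := congr1 (fun M : 'cV[R]_n => M i 0) c0; rewrite !mxE => /eqP.
  by rewrite subr_eq0 => /eqP.
have rep : forall v : 'cV[R]_n, exists (wt' : 'cV[R]_d) (bt' : R),
    forall i, v i 0 = dotv wt' (xt i) + bt'.
  move=> v; have rfull : row_full (Xmat xt) by rewrite /row_full HR.
  have sub := submx_full v^T rfull.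
  exists (v^T *m pinvmx (Xmat xt))^T, 0 => i.
  have := congr1 (fun M : 'rV[R]_n => M 0 i) (mulmxKpV sub); rewrite !mxE => <-.
  by rewrite addr0 /dotv; apply: eq_bigr => k _; rewrite !mxE.
split => //; split => //.
pose phi := fun p : Z * R * 'cV[R]_d * R =>
  let '(w', b', wt', bt') := p in (w', b', fun i => dotv wt' (xt i) + bt').
have objE p : svm_obj ip C (phi p) = svmp_obj ip xt C 0 p.
  by case: p => [[[w' b'] wt'] bt']; rewrite /= mul0r addr0.
have consE p j : svm_cons ip y z j (phi p) = svmp_cons ip y z xt j p.
  by case: p => [[[w' b'] wt'] bt']; case: j.
have LE p mu : lagrangian (svm_obj ip C) (svm_cons ip y z) (phi p) mu
    = lagrangian (svmp_obj ip xt C 0) (svmp_cons ip y z xt) p mu.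
  by rewrite /lagrangian objE; congr (_ + _); apply: eq_bigr => j _; rewrite consE.
have surj x' : exists p, phi p = x'.
  case: x' => [[w' b'] xi']; have [wt' [bt' E]] := rep (\col_i xi' i).
  exists (w', b', wt', bt'); rewrite /=; congr (_, _); apply: funext => i.
  by rewrite -E mxE.
have x0E : (w, b, fun i => dotv wt (xt i) + bt) = phi (w, b, wt, bt) by [].
rewrite x0E; split.
- by move=> j; rewrite consE; exact: feas.
- move=> x' fx'; have [p Ep] := surj x'; subst x'; rewrite !objE; apply: popt => j.
  by rewrite -consE; exact: fx' j.
- exact: lam0.
- move=> mu mu0 t Ht x'; have [p Ep] := surj x'; subst x'; rewrite LE.
  by apply: (dopt mu mu0 t) => p'; rewrite -LE; exact: Ht.
- split.
  + by move=> x'; have [p Ep] := surj x'; subst x'; rewrite objE LE; exact: gap1.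
  + by move=> t Ht; rewrite objE; apply: gap2 => p; rewrite -LE; exact: Ht.
Qed.
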